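(* Let $\mathcal A$ be a group and $\mathcal H$ any subgroup. Then there exists a generating system $X$ of $\mathcal A$ of size $d(\mathcal A)$ such that the Schreier graph $\mathrm{Sch}(\mathcal A,\mathcal H,X)$ is vertex-transitive.
   Context: $d(\mathcal A)$ is the number of elements of order $2$ of $\mathcal A$ plus half the number of elements of order at least $3$. A generating system is a multiset of elements generating $\mathcal A$. The Schreier graph $\mathrm{Sch}(\mathcal A,\mathcal H,X)$ has vertices the right cosets $\mathcal Hg$ and, for each coset and each $x$ with $x\in X$ or $x^{-1}\in X$, an edge labeled $x$ from $\mathcal Hg$ to $\mathcal Hgx$ whose inverse is the edge labeled $x^{-1}$ from $\mathcal Hgx$ (loops and multiple edges allowed). Vertex-transitive means transitive on vertices under graph automorphisms (not necessarily label-preserving). *)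

(* Defs.v *)
From mathcomp Require Import all_boot all_fingroup.
Set Implicit Arguments. Unset Strict Implicit. Unset Printing Implicit Defensive.
Local Open Scope group_scope.

Definition dA (gT : finGroupType) (A : {set gT}) : nat :=
  (#|[set x in A | #[x] == 2]| + #|[set x in A | 2 < #[x]]| %/ 2)%N.

Section Schreier.
Variables (gT : finGroupType) (H A : {set gT}) (X : seq gT).

(* Darts of Sch(A,H,X): (right coset Hg, index i of the generator in the
   multiset X, orientation b).  b = false: edge labeled x_i from Hg to Hg x_i;
   b = true: edge labeled x_i^-1 from Hg to Hg x_i^-1 (only present when
   x_i^-1 <> x_i, otherwise it coincides with the b = false dart). *)
Definition sch_dart_t := ({set gT} * 'I_(size X) * bool)%type.

Definition sch_gen (i : 'I_(size X)) : gT := nth 1 X i.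

Definition sch_label (d : sch_dart_t) : gT :=
  if d.2 then (sch_gen d.1.2)^-1 else sch_gen d.1.2.

Definition sch_vertices : {set {set gT}} := rcosets H A.

Definition sch_darts : {set sch_dart_t} :=
  [set d : sch_dart_t | (d.1.1 \in rcosets H A)
                        && (d.2 ==> ((sch_gen d.1.2)^-1 != sch_gen d.1.2))].

Definition sch_origin (d : sch_dart_t) : {set gT} := d.1.1.

Definition sch_inv (d : sch_dart_t) : sch_dart_t :=
  (d.1.1 :* sch_label d, d.1.2,
   if (sch_gen d.1.2)^-1 == sch_gen d.1.2 then false else ~~ d.2).

(* graph automorphism (not necessarily label-preserving): bijections on
   vertices and on darts commuting with origin and edge inversion *)
Definition sch_aut (fV : {perm {set gT}}) (fD : {perm sch_dart_t}) : Prop :=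
  [/\ fV @: sch_vertices = sch_vertices,
      fD @: sch_darts = sch_darts,
      {in sch_darts, forall d, fV (sch_origin d) = sch_origin (fD d)} &
      {in sch_darts, forall d, fD (sch_inv d) = sch_inv (fD d)}].

Definition sch_vertex_transitive : Prop :=
  forall u v, u \in sch_vertices -> v \in sch_vertices ->
    exists fV : {perm {set gT}}, exists fD : {perm sch_dart_t},
      sch_aut fV fD /\ fV u = v.

End Schreier.

(* Main.v *)
Require Import Defs.
From mathcomp Require Import all_boot all_fingroup all_solvable.
Set Implicit Arguments. Unset Strict Implicit. Unset Printing Implicit Defensive.
Local Open Scope group_scope.

Section Sch.
Variables (gT : finGroupType) (X : seq gT) (a : gT).
Hypothesis HU : uniq X.
Hypothesis HP2 : forall y, y \in X -> y^-1 \in X -> y^-1 = y.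
Hypothesis HP3 : forall y, y \in X -> (y ^ a \in X) || ((y ^ a)^-1 \in X).

Local Notation g := (@sch_gen gT X).
Definition lab (p : 'I_(size X) * bool) : gT := if p.2 then (g p.1)^-1 else g p.1.

Definition sig (p : 'I_(size X) * bool) : 'I_(size X) * bool :=
 if (g p.1)^-1 == g p.1 then (insubd p.1 (index (g p.1 ^ a) X), p.2)
 else if (lab p) ^ a \in X then (insubd p.1 (index (lab p ^ a) X), false)
 else (insubd p.1 (index (lab p ^ a)^-1 X), true).

Lemma g_ins i y : y \in X -> g (insubd i (index y X)) = y.
Proof. by move=> hy; rewrite /sch_gen val_insubd index_mem hy nth_index. Qed.

Lemma g_mem i : g i \in X.
Proof. by rewrite /sch_gen mem_nth. Qed.

Lemma g_inj i j : g i = g j -> i = j.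
Proof.
move=> e; apply/val_inj; apply/eqP.
by rewrite -(nth_uniq 1 (ltn_ord i) (ltn_ord j) HU); apply/eqP.
Qed.

Lemma inv_conj (y : gT) : ((y ^ a)^-1 == y ^ a) = (y^-1 == y).
Proof. by rewrite -conjVg (inj_eq (conjg_inj a)). Qed.

Lemma inv_inv (y : gT) : ((y^-1)^-1 == y^-1) = (y^-1 == y).
Proof. by rewrite invgK eq_sym. Qed.

Lemma lab_inv p : (g p.1)^-1 == g p.1 -> lab p = g p.1.
Proof. by case: p => i [] //= /eqP. Qed.

Lemma lab_status p : ((lab p)^-1 == lab p) = ((g p.1)^-1 == g p.1).
Proof. by case: p => i [] //=; rewrite inv_inv. Qed.

Lemma lab_neg i b : lab (i, ~~ b) = (lab (i, b))^-1.
Proof. by case: b; rewrite /lab /= ?invgK. Qed.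

Lemma lab_X p : (lab p ^ a \in X) || ((lab p ^ a)^-1 \in X).
Proof.
case: p => i [] /=; rewrite /lab /=; last exact: HP3 (g_mem i).
by rewrite conjVg invgK orbC; apply: HP3 (g_mem i).
Qed.

Lemma sig_label p : lab (sig p) = lab p ^ a.
Proof.
rewrite /sig; case: ifP => hx.
  have hX : g p.1 ^ a \in X.
    case/orP: (HP3 (g_mem p.1)) => // h.
    by rewrite -conjVg (eqP hx) in h.
  rewrite /lab /= g_ins //; case: (p.2) => //.
  by rewrite -conjVg (eqP hx).
case: ifP => hy; first by rewrite /lab /= g_ins.
have := lab_X p; rewrite hy /= => hy'.
by rewrite /lab /= g_ins // invgK.
Qed.

Lemma sig_status p : ((g (sig p).1)^-1 == g (sig p).1) = ((g p.1)^-1 == g p.1).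
Proof.
by rewrite -lab_status sig_label inv_conj lab_status.
Qed.

Lemma label_inj p q : (g p.1)^-1 != g p.1 -> (g q.1)^-1 != g q.1 ->
  lab p = lab q -> p = q.
Proof.
case: p => i b; case: q => j c /= hi hj.
case: b; case: c; rewrite /lab /=.
- by move/invg_inj/g_inj => ->.
- move=> e; case/negP: hi; apply/eqP; apply: HP2; first exact: g_mem.
  by rewrite e g_mem.
- move=> e; case/negP: hj; apply/eqP; apply: HP2; first exact: g_mem.
  by rewrite -e g_mem.
- by move/g_inj => ->.
Qed.

Lemma sig_inj : injective sig.
Proof.
move=> p q e.
have hl : lab p = lab q by apply: (conjg_inj a); rewrite -!sig_label e.
have hs : ((g p.1)^-1 == g p.1) = ((g q.1)^-1 == g q.1) by rewrite -sig_status e sig_status.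
case: (boolP ((g p.1)^-1 == g p.1)) => hp.
  have hq := hp; rewrite hs in hq.
  move: e; rewrite /sig hp hq; case=> _ e2.
  rewrite (lab_inv hp) (lab_inv hq) in hl.
  by case: p q hl e2 {hp hq hs} => i b [j c] /= /g_inj -> ->.
apply: label_inj => //; by rewrite -hs.
Qed.

End Sch.
Section Aut.
Variables (gT : finGroupType) (X : seq gT) (a : gT).
Hypothesis HU : uniq X.
Hypothesis HP2 : forall y, y \in X -> y^-1 \in X -> y^-1 = y.
Hypothesis HP3 : forall y, y \in X -> (y ^ a \in X) || ((y ^ a)^-1 \in X).
Local Notation g := (@sch_gen gT X).
Local Notation sg := (@sig gT X a).

Definition fDf (d : sch_dart_t X) : sch_dart_t X :=
  ((d.1.1 :* a, (sg (d.1.2, d.2)).1), (sg (d.1.2, d.2)).2).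

Lemma fDf_inj : injective fDf.
Proof.
move=> [[C i] b] [[C' i'] b']; rewrite /fDf /=; case=> e1 e2 e3.
have e : sg (i, b) = sg (i', b') by rewrite [LHS]surjective_pairing e2 e3 -surjective_pairing.
move/(sig_inj HU HP2 HP3): e => [-> ->].
by rewrite (rcoset_inj e1).
Qed.

Definition fV : {perm {set gT}} := perm (@rcoset_inj gT a).
Definition fD : {perm sch_dart_t X} := perm fDf_inj.

Lemma aut_ok (H A : {group gT}) : a \in A -> @sch_aut gT H A X fV fD.
Proof.
move=> aA.
have rc C : C \in rcosets H A -> C :* a \in rcosets H A.
  case/rcosetsP => x xA ->; apply/rcosetsP; exists (x * a); first exact: groupM.
  by rewrite rcosetM.
split.
- apply/eqP; rewrite eqEcard card_imset ?leqnn ?andbT; last exact: perm_inj.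
  apply/subsetP => _ /imsetP [C hC ->]; rewrite permE; exact: rc.
- apply/eqP; rewrite eqEcard card_imset ?leqnn ?andbT; last exact: perm_inj.
  apply/subsetP => _ /imsetP [[[C i] b] hd ->]; rewrite permE /fDf.
  move: hd; rewrite /sch_darts inE /= => /andP [hC hb].
  rewrite /sch_darts inE /= rc //=.
  case: (boolP ((g i)^-1 == g i)) => hi.
    move: hb; rewrite hi /= implybF => /negbTE hb.
    by rewrite /sig hi /= hb.
  by rewrite (sig_status HP3) hi implybT.
- by move=> d _; rewrite !permE.
- move=> [[C i] b]; rewrite /sch_darts inE /= => /andP [hC hb].
  rewrite !permE /fDf /sch_inv /=.
  have hl : @sch_label gT X ((C, i), b) = lab (i, b) by [].
  have hl2 : forall d : sch_dart_t X, @sch_label gT X d = lab (d.1.2, d.2) by [].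
  rewrite !hl2 /= -surjective_pairing (sig_label HP3) -!rcosetM conjgE !mulgA mulgV mul1g.
  rewrite (sig_status HP3).
  case: (boolP ((g i)^-1 == g i)) => hi.
    move: hb; rewrite hi /= implybF => /negbTE hb; rewrite hb.
    by rewrite /sig hi.
  set q := sg (i, b).
  have -> : sg (i, ~~ b) = (q.1, ~~ q.2).
    apply: (label_inj HU HP2).
    - by rewrite (sig_status HP3).
    - by rewrite /= (sig_status HP3).
    rewrite (sig_label HP3) lab_neg -/q.
    by rewrite -surjective_pairing /q (sig_label HP3) lab_neg conjVg.
  by [].
Qed.

End Aut.

Lemma inv_ord (gT : finGroupType) (x : gT) : (x^-1 == x) = (#[x] <= 2)%N.
Proof.
rewrite eq_invg_mul.
have -> : x * x = x ^+ 2 by rewrite expgS expg1.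
rewrite -order_dvdn.
case: (leqP #[x] 2) => h.
  by move: h (order_gt0 x); case: #[x] => [|[|[|]]].
apply/negbTE; apply/negP => /(dvdn_leq (isT : (0 < 2)%N)); by rewrite leqNgt h.
Qed.

Lemma ord2 (gT : finGroupType) (x : gT) : (#[x] == 2) = (x != 1) && (x^-1 == x).
Proof.
rewrite inv_ord -order_eq1; move: (order_gt0 x); by case: #[x] => [|[|[|]]].
Qed.

Lemma ordgt2 (gT : finGroupType) (x : gT) : (2 < #[x])%N = (x^-1 != x).
Proof. by rewrite inv_ord ltnNge. Qed.

Theorem proposition6p1 (gT : finGroupType) (A H : {group gT}) :
  H \subset A ->
  exists X : seq gT,
    [/\ size X = dA A,
        <<[set x in X]>> = A &
        sch_vertex_transitive H A X].
Proof.
move=> _.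
set S := [set x in A | (x != 1) && (enum_rank x <= enum_rank x^-1)%N].
have SP z : z \in A -> z != 1 -> (z \in S) || (z^-1 \in S).
  move=> zA nz; rewrite !inE groupV zA invg_eq1 nz invgK /=.
  exact: leq_total.
have SA z : z \in S -> z \in A by rewrite inE => /andP [].
have S1 z : z \in S -> z != 1 by rewrite inE => /and3P [].
have HU : uniq (enum S) by apply: enum_uniq.
have HP2 y : y \in enum S -> y^-1 \in enum S -> y^-1 = y.
  rewrite !mem_enum !inE => /and3P [_ _ h1] /and3P [_ _ h2].
  rewrite invgK in h2.
  by apply: enum_rank_inj; apply: val_inj; apply/eqP; rewrite eqn_leq h1 h2.
have HP3 a : a \in A -> forall y, y \in enum S -> (y ^ a \in enum S) || ((y ^ a)^-1 \in enum S).
  move=> aA y; rewrite !mem_enum => yS.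
  apply: SP; first by rewrite groupJ // SA.
  by rewrite conjg_eq1 S1.
have ES : [set x in enum S] = S by apply/setP => x; rewrite inE mem_enum.
exists (enum S); split.
- rewrite -cardE /dA.
  set I := [set x in A | #[x] == 2].
  set T := [set x in A | 2 < #[x]].
  set T1 := [set x in T | (enum_rank x < enum_rank x^-1)%N].
  have -> : S = I :|: T1.
    apply/setP => x; rewrite !inE ord2 ordgt2.
    case: (x \in A) => //=.
    case: (eqVneq x^-1 x) => h /=.
      by rewrite h leqnn andbT orbF.
    have ne : (enum_rank x : nat) != enum_rank x^-1.
      by apply/negP => /eqP/val_inj/enum_rank_inj e; move: h; rewrite -e eqxx.
    have -> : x != 1 by apply/negP => /eqP e; move: h; rewrite e invg1 eqxx.
    by rewrite leq_eqVlt (negbTE ne).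
  rewrite cardsU.
  have -> : I :&: T1 = set0.
    apply/setP => x; rewrite !inE; apply/negbTE; apply/negP.
    by move=> /andP [/andP [_ /eqP e] /andP [/andP [_ h] _]]; rewrite e in h.
  rewrite cards0 subn0.
  have -> : #|T| = (2 * #|T1|)%N.
    rewrite -(cardsID T1 T).
    have -> : T :&: T1 = T1.
      by apply/setIidPr/subsetP => x; rewrite inE => /andP [].
    have -> : T :\: T1 = invg @^-1: T1.
      apply/setP => x; rewrite !inE groupV orderV invgK.
      case: (x \in A) => //=; case h2: (2 < #[x])%N => //=.
      have ne : (enum_rank x : nat) != enum_rank x^-1.
        by apply/negP => /eqP/val_inj/enum_rank_inj e; move: h2; rewrite ordgt2 -e eqxx.
      by rewrite andbT -leqNgt leq_eqVlt eq_sym (negbTE ne).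
    by rewrite card_preimset ?mul2n ?addnn //; apply: invg_inj.
  by rewrite mulKn.
- rewrite ES; apply/eqP; rewrite eqEsubset gen_subG; apply/andP; split.
    by apply/subsetP => z /SA.
  apply/subsetP => z zA; case: (eqVneq z 1) => [->|nz]; first exact: group1.
  case/orP: (SP z zA nz) => h; first exact: mem_gen.
  by rewrite -[z]invgK groupV; apply: mem_gen.
- move=> u v /rcosetsP [x xA ->] /rcosetsP [y yA ->].
  have aA : x^-1 * y \in A by rewrite groupM ?groupV.
  exists (fV (x^-1 * y)), (fD HU (HP2) (HP3 _ aA)); split.
    exact: aut_ok.
  by rewrite permE /= -rcosetM mulKVg.
Qed.
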